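(* Let $A$ be an $N\times N$ $\{0,1\}$-matrix with no zero row and no zero column, and let $\tau_+,\tau_-:\mathcal{V}_A\to\Omega_A$ satisfy the cylinder condition. For $i=1,\dots,N$ put $\mathfrak{s}_i:=\mathfrak{s}_{i,\tau_+}\oplus\mathfrak{s}_{i,\tau_-}$ on $\ell^2(\mathcal{V}_A,\mathbb{C}^2)$. Then: (1) $\mathfrak{s}_i$ and $\mathfrak{s}_i^*$ preserve $C_c(\mathcal{V}_A,\mathbb{C}^2)$; (2) for each $s\in(0,1]$, $\mathfrak{s}_i$ and $\mathfrak{s}_i^*$ have bounded commutators with $D_{\mathcal{V},s}$; (3) there is a sequence $(f_k)\subseteq C_c(\mathcal{V}_A,\mathbb{C}^2)$ with $\|f_k\|=1$ and $\|[D^{BP}_{\mathcal{V}},\mathfrak{s}_i]f_k\|\to\infty$.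
   Context: $\mathcal{V}_A$: admissible finite words ($A_{\mu_j\mu_{j+1}}=1$) including the empty word $\circ$; $\Omega_A$: infinite admissible sequences; $C_\mu$: cylinder set of sequences starting with $\mu$. $\mathfrak t:\mathcal{V}_A\to\Omega_A$ satisfies the cylinder condition if $\mathfrak t(\mu)\in C_\mu$ for all $\mu$. $\pi_{\mathfrak t}(f)\delta_\mu=f(\mathfrak t(\mu))\delta_\mu$ for $f\in C(\Omega_A)$. $\sigma_{\mathcal V}(\mu_1\mu_2\cdots\mu_k)=\mu_2\cdots\mu_k$; $V_\sigma\in\mathbb{B}(\ell^2(\mathcal{V}_A))$ is $(V_\sigma f)(v)=f(\sigma_{\mathcal V}(v))$ for $v\ne\circ$ and $(V_\sigma f)(\circ)=0$; $\mathfrak{s}_{i,\mathfrak t}:=\pi_{\mathfrak t}(\chi_{C_i})V_\sigma$. On $\ell^2(\mathcal{V}_A,\mathbb{C}^2)=\ell^2(\mathcal{V}_A)\oplus\ell^2(\mathcal{V}_A)$: $D_{\mathcal{V},s}(\phi_+,\phi_-)(\mu)=|\mu|^s(\phi_-(\mu),\phi_+(\mu))$ and $D^{BP}_{\mathcal V}(\phi_+,\phi_-)(\mu)=e^{|\mu|}(\phi_-(\mu),\phi_+(\mu))$, self-adjoint closures from $C_c(\mathcal{V}_A,\mathbb{C}^2)$. *)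

(* Defs.v *)
From HB Require Import structures.
From mathcomp Require Import all_boot all_order all_algebra.
From mathcomp Require Import all_classical all_reals all_analysis.
From mathcomp Require Import complex.
Set Implicit Arguments. Unset Strict Implicit. Unset Printing Implicit Defensive.
Import Order.TTheory GRing.Theory Num.Theory.
Local Open Scope ring_scope.
Local Open Scope classical_set_scope.
Local Open Scope complex_scope.

Section Defs.
Variables (R : realType) (N : nat) (A : 'M[bool]_N).

(* finite words over the alphabet 'I_N (letter j+1 of the paper is j : 'I_N) *)
Definition word := seq 'I_N.
Definition iseq := nat -> 'I_N.

(* admissible finite words V_A (includes the empty word [::] = ∘) *)
Definition admissible (mu : word) : bool := sorted (fun a b => A a b) mu.
Definition OmegaA (x : iseq) : Prop := forall n, A (x n) (x n.+1).
Definition cylinder (mu : word) (x : iseq) : Prop :=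
  forall k, (k < size mu)%N -> x k = nth (x k) mu k.
Definition cylinder_condition (t : word -> iseq) : Prop :=
  forall mu, admissible mu -> OmegaA (t mu) /\ cylinder mu (t mu).

Definition chiC (mu : word) (x : iseq) : R[i] :=
  if [forall k : 'I_(size mu), x k == nth (x k) mu k] then 1 else 0.

(* functions on V_A (extended by 0 outside V_A) *)
Definition fn := word -> R[i].
(* C^2-valued functions, l^2(V_A,C^2) = l^2(V_A) (+) l^2(V_A) *)
Definition fn2 := (fn * fn)%type.

Definition pi_t (t : word -> iseq) (f : iseq -> R[i]) (phi : fn) : fn :=
  fun mu => if admissible mu then f (t mu) * phi mu else 0.

Definition Vsigma (phi : fn) : fn :=
  fun v => if admissible v then
             (match v with [::] => 0 | _ :: w => phi w end) else 0.

Definition frak_s (t : word -> iseq) (i : 'I_N) (phi : fn) : fn :=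
  pi_t t (chiC [:: i]) (Vsigma phi).

Definition frak_s2 (tp tm : word -> iseq) (i : 'I_N) (f : fn2) : fn2 :=
  (frak_s tp i f.1, frak_s tm i f.2).

Definition D_Vs (s : R) (f : fn2) : fn2 :=
  (fun mu => ((size mu)%:R `^ s)%:C * f.2 mu,
   fun mu => ((size mu)%:R `^ s)%:C * f.1 mu).

Definition D_BP (f : fn2) : fn2 :=
  (fun mu => (expR (size mu)%:R)%:C * f.2 mu,
   fun mu => (expR (size mu)%:R)%:C * f.1 mu).

Definition Cc (f : fn2) : Prop :=
  finite_set [set v | f.1 v != 0 \/ f.2 v != 0] /\
  (forall v, ~~ admissible v -> f.1 v = 0 /\ f.2 v = 0).

(* l^2 norm (meaningful for finitely supported f) *)
Definition norm2 (f : fn2) : R :=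
  Num.sqrt (\sum_(v \in [set: word])
              (Normc.normc (f.1 v) ^+ 2 + Normc.normc (f.2 v) ^+ 2)).

(* inner product (meaningful when g is finitely supported) *)
Definition ip (f g : fn2) : R[i] :=
  \sum_(v \in [set: word]) ((f.1 v)^* * g.1 v + (f.2 v)^* * g.2 v).

Definition delta (w : word) : fn := fun v => if v == w then 1 else 0.
Definition fn0 : fn := fun _ => 0.

(* Hilbert adjoint of T, computed through its matrix coefficients in the
   orthonormal basis (delta_w,0), (0,delta_w), w in V_A:
   (T^* g)(w)_k = < T e_{w,k}, g >. *)
Definition adj (T : fn2 -> fn2) (g : fn2) : fn2 :=
  (fun w => if admissible w then ip (T (delta w, fn0)) g else 0,
   fun w => if admissible w then ip (T (fn0, delta w)) g else 0).

Definition comm (D T : fn2 -> fn2) (f : fn2) : fn2 :=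
  (fun v => (D (T f)).1 v - (T (D f)).1 v,
   fun v => (D (T f)).2 v - (T (D f)).2 v).

Definition preserves_Cc (T : fn2 -> fn2) : Prop := forall f, Cc f -> Cc (T f).

Definition bounded_comm (D T : fn2 -> fn2) : Prop :=
  exists C : R, forall f, Cc f -> norm2 (comm D T f) <= C * norm2 f.

End Defs.

(* Main.v *)
Require Import Defs.
From HB Require Import structures.
From mathcomp Require Import all_boot all_order all_algebra.
From mathcomp Require Import all_classical all_reals all_analysis.
From mathcomp Require Import complex lra.
Import Order.TTheory GRing.Theory Num.Theory.
Set Implicit Arguments. Unset Strict Implicit. Unset Printing Implicit Defensive.
Local Open Scope ring_scope.
Local Open Scope classical_set_scope.

Section Aux.
Variables (R : realType) (N : nat) (A : 'M[bool]_N).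

Lemma sumT_seq (V : nmodType) (F : word N -> V) (r : seq (word N)) : uniq r ->
  (forall v, v \notin r -> F v = 0) ->
  \sum_(v \in [set: word N]) F v = \sum_(v <- r) F v.
Proof.
move=> ur Fr; rewrite (fsbigE r) //; last by move=> v _; exact: Fr.
by apply: eq_bigl => v; rewrite in_setT.
Qed.

Lemma sum_push (h : word N -> word N) (r : seq (word N)) (F G : word N -> R) :
  injective h -> uniq r ->
  (forall w, w \notin r -> F w = 0) -> (forall v, v \notin map h r -> G v = 0) ->
  (forall w, w \in r -> G (h w) <= F w) ->
  \sum_(v \in [set: word N]) G v <= \sum_(v \in [set: word N]) F v.
Proof.
move=> hi ur Fr Gr GF.
rewrite (sumT_seq (r := map h r)) ?map_inj_uniq // (sumT_seq (r := r)) //.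
rewrite big_map big_seq [X in _ <= X]big_seq; exact: ler_sum.
Qed.

Lemma sum_pull (h : word N -> word N) (r s : seq (word N)) (F G : word N -> R) :
  injective h -> uniq r -> uniq s ->
  (forall w, w \notin r -> G w = 0) -> (forall v, v \notin s -> F v = 0) ->
  (forall v, 0 <= F v) -> (forall w, w \in r -> G w <= F (h w)) ->
  \sum_(v \in [set: word N]) G v <= \sum_(v \in [set: word N]) F v.
Proof.
move=> hi ur us Gr Fs F0 GF.
rewrite (sumT_seq (r := r)) //.
apply: (le_trans (y := \sum_(w <- r) F (h w))).
  by rewrite big_seq [X in _ <= X]big_seq; exact: ler_sum.
pose F' v := if v \in map h r then F v else 0.
have -> : \sum_(w <- r) F (h w) = \sum_(v <- map h r) F' v.
  by rewrite big_map big_seq [RHS]big_seq; apply: eq_bigr => w wr; rewrite /F' map_f.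
rewrite -(sumT_seq (r := map h r)) ?map_inj_uniq //; last by move=> v /negbTE; rewrite /F' => ->.
rewrite (sumT_seq (r := undup (map h r ++ s))) ?undup_uniq //; last first.
  by move=> v; rewrite mem_undup mem_cat negb_or /F' => /andP[/negbTE -> _].
rewrite [X in _ <= X](sumT_seq (r := undup (map h r ++ s))) ?undup_uniq //; last first.
  by move=> v; rewrite mem_undup mem_cat negb_or => /andP[_ /Fs].
by apply: ler_sum => v _; rewrite /F'; case: ifP.
Qed.

Lemma Cc_supp (f : fn2 R N) : Cc A f ->
  exists r : seq (word N), uniq r /\ forall v, v \notin r -> f.1 v = 0 /\ f.2 v = 0.
Proof.
move=> [fin _]; exists (finmap.enum_fset (fset_set [set v | f.1 v != 0 \/ f.2 v != 0])); split; first exact: finmap.fset_uniq.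
move=> v; rewrite in_fset_set // notin_setE /= => H.
by split; apply/eqP; apply: contra_notT H => ?; [left|right].
Qed.

Lemma Cc_intro (f : fn2 R N) (r : seq (word N)) :
  (forall v, v \notin r -> f.1 v = 0 /\ f.2 v = 0) ->
  (forall v, ~~ admissible A v -> f.1 v = 0 /\ f.2 v = 0) -> Cc A f.
Proof.
move=> Hr Ha; split => //; apply: (sub_finite_set _ (finite_seq r)).
move=> v /= H; apply/negPn/negP => /Hr[E1 E2]; rewrite E1 E2 eqxx in H; by case: H.
Qed.
Lemma chiC1 (i : 'I_N) (x : iseq N) :
  chiC R [:: i] x = if x 0%N == i then 1 else 0.
Proof.
rewrite /chiC; have -> : [forall k : 'I_(size [:: i]), x k == nth (x k) [:: i] k] = (x 0%N == i).
  apply/forallP/idP => [H|/eqP E k]; first exact: (H ord0).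
  by rewrite (ord1 k) /= E.
by [].
Qed.
Lemma adm_cons (a : 'I_N) w : admissible A (a :: w) -> admissible A w.
Proof. exact: path_sorted. Qed.

Lemma frak_sE (t : word N -> iseq N) (ht : cylinder_condition A t) i (phi : fn R N) v :
  frak_s A t i phi v = match v return complex R with [::] => 0 | a :: w =>
     if admissible A (a :: w) && (a == i) then phi w else 0 end.
Proof.
rewrite /frak_s /pi_t /Vsigma; case: v => [|a w]; first by case: (admissible A [::]); rewrite ?mulr0.
case: ifP => // adm; rewrite chiC1.
have [_ cyl] := ht _ adm.
have -> : t (a :: w) 0%N = a by rewrite (cyl 0%N).
by rewrite adm; case: (a == i); rewrite ?mul1r ?mul0r.
Qed.


Lemma normc_real (c : R) : Normc.normc (c%:C)%C = `|c|.
Proof. by rewrite /Normc.normc /= expr0n /= addr0 sqrtr_sqr. Qed.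

Lemma normc_scale (c : R) (z : R[i]) : `|c| <= 1 ->
  Normc.normc ((c%:C)%C * z) ^+ 2 <= Normc.normc z ^+ 2.
Proof.
move=> hc; rewrite Normc.normcM normc_real exprMn.
have h0 : 0 <= Normc.normc z ^+ 2 by rewrite sqr_ge0.
have h1 : `|c| ^+ 2 <= 1 by rewrite -(expr1n _ 2) ler_pXn2r ?nnegrE.
by rewrite -[X in _ <= X]mul1r ler_wpM2r.
Qed.

Lemma powR_step (s : R) (n : nat) : 0 < s <= 1 ->
  0 <= n.+1%:R `^ s - n%:R `^ s <= 1.
Proof.
move=> /andP[s0 s1]; apply/andP; split.
  rewrite subr_ge0; apply: ge0_ler_powR; rewrite ?nnegrE ?ler_nat //; exact: ltW.
case: n => [|n].
  by rewrite powR0 ?gt_eqF // powR1 subr0.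
set a : R := n.+1%:R; have a0 : 0 < a by rewrite ltr0n.
have -> : (n.+2%:R : R) = a + 1 by rewrite /a -natr1.
set b := a + 1; have b0 : 0 < b by rewrite /b; lra.
set x := a / b.
have x0 : 0 < x by rewrite divr_gt0.
have x1 : x <= 1 by rewrite ler_pdivrMr // mul1r /b lerDl.
have bi0 : 0 < b^-1 by rewrite invr_gt0.
have bi1 : b^-1 <= 1 by rewrite invf_le1 // /b; lra.
have ea : a `^ s = x `^ s * b `^ s.
  by rewrite -powRM ?ltW // /x divfK // gt_eqF.
have e1 : 1 = b^-1 `^ s * b `^ s.
  by rewrite -powRM ?ltW // mulVf ?gt_eqF // powR1.
have hx : x <= x `^ s by apply: ger1_powR; rewrite ?x0.
have hb : b^-1 <= b^-1 `^ s by apply: ger1_powR; rewrite ?bi0.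
have bs0 : 0 <= b `^ s by exact: powR_ge0.
have : x + b^-1 = 1 by rewrite /x -[X in _ + X]mul1r -mulrDl divff // gt_eqF.
rewrite ea; set p := b `^ s => xb.
have : x * p + b^-1 * p <= x `^ s * p + b^-1 `^ s * p.
  by apply: lerD; apply: ler_wpM2r.
rewrite -mulrDl xb mul1r -e1; lra.
Qed.


Variables (tp tm : word N -> iseq N) (htp : cylinder_condition A tp)
  (htm : cylinder_condition A tm) (i : 'I_N).

Local Notation si := (@frak_s2 R N A tp tm i).

Lemma si1 (f : fn2 R N) v : (si f).1 v = match v return complex R with [::] => 0 | a :: w =>
     if admissible A (a :: w) && (a == i) then f.1 w else 0 end.
Proof. exact: frak_sE. Qed.
Lemma si2 (f : fn2 R N) v : (si f).2 v = match v return complex R with [::] => 0 | a :: w =>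
     if admissible A (a :: w) && (a == i) then f.2 w else 0 end.
Proof. exact: frak_sE. Qed.

Lemma si_Cc : preserves_Cc A si.
Proof.
move=> f Cf; have [r [ur Hr]] := Cc_supp Cf.
apply: (@Cc_intro _ (map (cons i) r)) => v; rewrite si1 si2.
  case: v => [|a u]; first by [].
  case: ifP => // /andP[_ /eqP ->] H; apply: Hr; apply: contra H => ur'.
  exact: map_f.
case: v => [|a u]; first by [].
by move=> /negbTE ->.
Qed.

Lemma adjE1 (g : fn2 R N) w :
  (adj A si g).1 w = if admissible A (i :: w) then g.1 (i :: w) else 0.
Proof.
rewrite /adj /ip; cbn [fst snd]; rewrite (sumT_seq (r := [:: i :: w])) //; last first.
  move=> v; rewrite inE => hv; rewrite si1 si2 /fn0; cbn [fst snd].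
  case: v hv => [|a u] hv; first by rewrite conjC0 !mul0r addr0.
  rewrite if_same conjC0 mul0r addr0.
  case: ifP => [/andP[_ /eqP ea]|_]; last by rewrite conjC0 !mul0r.
  rewrite /delta; case: ifP => [/eqP eu|]; first by move: hv; rewrite ea eu eqxx.
  by rewrite conjC0 !mul0r.
rewrite big_seq1 si1 si2 /fn0; cbn [fst snd]; rewrite /delta eqxx andbT if_same conjC0 mul0r addr0.
have [adm|nadm] := boolP (admissible A (i :: w)); first by rewrite (adm_cons adm) eqxx conjC1 mul1r.
by rewrite ?(negbTE nadm) conjC0 mul0r if_same.
Qed.

Lemma adjE2 (g : fn2 R N) w :
  (adj A si g).2 w = if admissible A (i :: w) then g.2 (i :: w) else 0.
Proof.
rewrite /adj /ip; cbn [fst snd]; rewrite (sumT_seq (r := [:: i :: w])) //; last first.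
  move=> v; rewrite inE => hv; rewrite si1 si2 /fn0; cbn [fst snd].
  case: v hv => [|a u] hv; first by rewrite conjC0 !mul0r addr0.
  rewrite if_same conjC0 mul0r add0r.
  case: ifP => [/andP[_ /eqP ea]|_]; last by rewrite conjC0 !mul0r.
  rewrite /delta; case: ifP => [/eqP eu|]; first by move: hv; rewrite ea eu eqxx.
  by rewrite conjC0 !mul0r.
rewrite big_seq1 si1 si2 /fn0; cbn [fst snd]; rewrite /delta eqxx andbT if_same conjC0 mul0r add0r.
have [adm|nadm] := boolP (admissible A (i :: w)); first by rewrite (adm_cons adm) eqxx conjC1 mul1r.
by rewrite ?(negbTE nadm) conjC0 mul0r if_same.
Qed.

Lemma adj_Cc : preserves_Cc A (adj A si).
Proof.
move=> g Cg; have [r [ur Hr]] := Cc_supp Cg.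
apply: (@Cc_intro _ (map behead r)) => v; rewrite adjE1 adjE2.
  case: ifP => // _ H; apply: Hr; apply: contra H => ir.
  by rewrite (_ : v = behead (i :: v)) // map_f.
case: ifP => // /adm_cons ->; done.
Qed.

Lemma commsi1 s f v : (comm (D_Vs s) si f).1 v = match v return complex R with [::] => 0 | a :: u =>
   if admissible A (a :: u) && (a == i)
   then ((((size u).+1%:R `^ s - (size u)%:R `^ s) : R)%:C)%C * f.2 u else 0 end.
Proof.
rewrite /comm /D_Vs; cbn [fst snd]; rewrite !si1 !si2; cbn [fst snd].
case: v => [|a u]; first by rewrite mulr0 subr0.
case: ifP => _; last by rewrite mulr0 subr0.
by rewrite rmorphB mulrBl.
Qed.

Lemma commsi2 s f v : (comm (D_Vs s) si f).2 v = match v return complex R with [::] => 0 | a :: u =>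
   if admissible A (a :: u) && (a == i)
   then ((((size u).+1%:R `^ s - (size u)%:R `^ s) : R)%:C)%C * f.1 u else 0 end.
Proof.
rewrite /comm /D_Vs; cbn [fst snd]; rewrite !si1 !si2; cbn [fst snd].
case: v => [|a u]; first by rewrite mulr0 subr0.
case: ifP => _; last by rewrite mulr0 subr0.
by rewrite rmorphB mulrBl.
Qed.

Lemma commadj1 s g w : (comm (D_Vs s) (adj A si) g).1 w =
  if admissible A (i :: w)
  then ((((size w)%:R `^ s - (size w).+1%:R `^ s) : R)%:C)%C * g.2 (i :: w) else 0.
Proof.
rewrite /comm; cbn [fst snd]; rewrite /D_Vs; cbn [fst snd]; rewrite adjE1 adjE2; cbn [fst snd].
case: ifP => _; last by rewrite mulr0 subr0.
by rewrite rmorphB mulrBl.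
Qed.

Lemma commadj2 s g w : (comm (D_Vs s) (adj A si) g).2 w =
  if admissible A (i :: w)
  then ((((size w)%:R `^ s - (size w).+1%:R `^ s) : R)%:C)%C * g.1 (i :: w) else 0.
Proof.
rewrite /comm; cbn [fst snd]; rewrite /D_Vs; cbn [fst snd]; rewrite adjE1 adjE2; cbn [fst snd].
case: ifP => _; last by rewrite mulr0 subr0.
by rewrite rmorphB mulrBl.
Qed.

Lemma normc0' : Normc.normc (0 : R[i]) = 0.
Proof. exact: Normc.normc0. Qed.

Lemma bc_si s : 0 < s <= 1 -> bounded_comm A (D_Vs s) si.
Proof.
move=> hs; exists 1 => f Cf; rewrite mul1r /norm2; apply: ler_wsqrtr.
have [r [ur Hr]] := Cc_supp Cf.
apply: (@sum_push (cons i) r) => //.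
- by move=> x y [].
- by move=> w /Hr[-> ->]; rewrite normc0' expr0n /= addr0.
- move=> v hv; rewrite commsi1 commsi2; case: v hv => [|a u] hv.
    by rewrite normc0' expr0n /= addr0.
  case: ifP => [/andP[_ /eqP ea]|_]; last by rewrite normc0' expr0n /= addr0.
  have : u \notin r by apply: contra hv => ?; rewrite ea map_f.
  by move=> /Hr[-> ->]; rewrite !mulr0 normc0' expr0n /= addr0.
- move=> w _; rewrite commsi1 commsi2.
  case: ifP => _; last by rewrite normc0' expr0n /= addr0 addr_ge0 ?sqr_ge0.
  have /andP[c0 c1] := powR_step (size w) hs.
  by rewrite addrC; apply: lerD; apply: normc_scale; rewrite ger0_norm.
Qed.

Lemma bc_adj s : 0 < s <= 1 -> bounded_comm A (D_Vs s) (adj A si).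
Proof.
move=> hs; exists 1 => g Cg; rewrite mul1r /norm2; apply: ler_wsqrtr.
have [r [ur Hr]] := Cc_supp Cg.
apply: (@sum_pull (cons i) (undup (map behead r)) r) => //.
- by move=> x y [].
- exact: undup_uniq.
- move=> w; rewrite mem_undup => hw; rewrite commadj1 commadj2.
  case: ifP => _; last by rewrite normc0' expr0n /= addr0.
  have : i :: w \notin r by apply: contra hw => ?; rewrite (_ : w = behead (i :: w)) // map_f.
  by move=> /Hr[-> ->]; rewrite !mulr0 normc0' expr0n /= addr0.
- by move=> w /Hr[-> ->]; rewrite normc0' expr0n /= addr0.
- by move=> v; rewrite addr_ge0 ?sqr_ge0.
- move=> w _; rewrite commadj1 commadj2.
  case: ifP => _; last by rewrite normc0' expr0n /= addr0 addr_ge0 ?sqr_ge0.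
  have /andP[c0 c1] := powR_step (size w) hs.
  by rewrite addrC; apply: lerD; apply: normc_scale; rewrite ler0_norm ?opprB // subr_le0 -subr_ge0.
Qed.

Lemma commBP1 f v : (comm (@D_BP R N) si f).1 v = match v return complex R with [::] => 0 | a :: u =>
   if admissible A (a :: u) && (a == i)
   then (((expR (size u).+1%:R - expR (size u)%:R) : R)%:C)%C * f.2 u else 0 end.
Proof.
rewrite /comm /D_BP; cbn [fst snd]; rewrite !si1 !si2; cbn [fst snd].
case: v => [|a u]; first by rewrite mulr0 subr0.
case: ifP => _; last by rewrite mulr0 subr0.
by rewrite rmorphB mulrBl.
Qed.

Lemma commBP2 f v : (comm (@D_BP R N) si f).2 v = match v return complex R with [::] => 0 | a :: u =>
   if admissible A (a :: u) && (a == i)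
   then (((expR (size u).+1%:R - expR (size u)%:R) : R)%:C)%C * f.1 u else 0 end.
Proof.
rewrite /comm /D_BP; cbn [fst snd]; rewrite !si1 !si2; cbn [fst snd].
case: v => [|a u]; first by rewrite mulr0 subr0.
case: ifP => _; last by rewrite mulr0 subr0.
by rewrite rmorphB mulrBl.
Qed.

Lemma norm_delta (w : word N) : admissible A (i :: w) ->
  norm2 (comm (@D_BP R N) si (delta R w, fn0 R (N:=N))) =
  expR (size w).+1%:R - expR (size w)%:R.
Proof.
move=> adm; rewrite /norm2 (sumT_seq (r := [:: i :: w])) //; last first.
  move=> v; rewrite inE => hv; rewrite commBP1 commBP2; cbn [fst snd].
  case: v hv => [|a u] hv; first by rewrite normc0' expr0n /= addr0.
  case: ifP => [/andP[_ /eqP ea]|_]; last by rewrite normc0' expr0n /= addr0.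
  rewrite /fn0 /delta; case: ifP => [/eqP eu|_]; first by move: hv; rewrite ea eu eqxx.
  by rewrite !mulr0 normc0' expr0n /= addr0.
rewrite big_seq1 commBP1 commBP2; cbn [fst snd]; rewrite adm eqxx /fn0 /delta eqxx.
rewrite mulr0 mulr1 normc0' expr0n add0r normc_real sqrtr_sqr normr_id ger0_norm //.
by rewrite subr_ge0 ler_expR ler_nat.
Qed.
End Aux.

Theorem proposition4p18 (R : realType) (N : nat) (A : 'M[bool]_N)
  (no_zero_row : forall a : 'I_N, exists b : 'I_N, A a b)
  (no_zero_col : forall b : 'I_N, exists a : 'I_N, A a b)
  (tp tm : word N -> iseq N)
  (htp : cylinder_condition A tp) (htm : cylinder_condition A tm)
  (i : 'I_N) :
  let si := frak_s2 A tp tm i in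
  (preserves_Cc A si /\ preserves_Cc A (adj A si)) /\
  (forall s : R, 0 < s <= 1 ->
     bounded_comm A (D_Vs s) si /\ bounded_comm A (D_Vs s) (adj A si)) /\
  (exists fk : nat -> fn2 R N,
     (forall k, Cc A (fk k) /\ norm2 (fk k) = 1) /\
     (norm2 (comm (@D_BP R N) si (fk k)) @[k --> \oo] --> +oo)).
Proof.
move=> si; split; first by split; [exact: si_Cc | exact: adj_Cc].
split; first by move=> s hs; split; [exact: bc_si | exact: bc_adj].
pose succ a := odflt a [pick b | A a b].
have succP a : A a (succ a).
  rewrite /succ; case: pickP => [b //|H].
  by have [b ab] := no_zero_row a; rewrite H in ab.
have pathT k x : path (fun a b => A a b) x (traject succ (succ x) k).
  by elim: k x => [|k IH] x //=; rewrite succP IH.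
pose w k := traject succ (succ i) k.
have admw k : admissible A (i :: w k) by exact: pathT.
exists (fun k => (delta R (w k), fn0 R (N:=N))); split.
  move=> k; split.
    apply: (@Cc_intro R N A _ [:: w k]) => v; cbn [fst snd]; rewrite /delta /fn0.
      by rewrite inE => /negbTE ->.
    by case: eqP => // -> H; move: H; rewrite (adm_cons (admw k)).
  rewrite /norm2 (sumT_seq (r := [:: w k])) //; last first.
    by move=> v; cbn [fst snd]; rewrite inE /delta /fn0 => /negbTE ->; rewrite normc0' expr0n /= addr0.
  by rewrite big_seq1; cbn [fst snd]; rewrite /delta /fn0 eqxx Normc.normc1 normc0' expr1n expr0n /= addr0 sqrtr1.
apply: (ger_cvgy _ cvgr_idn).
near=> k; rewrite norm_delta // size_traject.
have e2 : 2 <= expR (1 : R) by have := expR_ge1Dx (1 : R); rewrite (_ : 1 + 1 = 2 :> R).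
have ek : k%:R + 1 <= expR (k%:R : R) by rewrite addrC; exact: expR_ge1Dx.
have ek0 : 0 <= expR (k%:R : R) by exact: expR_ge0.
rewrite -addn1 natrD expRD.
have : expR (k%:R : R) * 2 <= expR k%:R * expR 1 by rewrite ler_wpM2l.
lra.
Unshelve. all: end_near.
Qed.
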